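(* Let $U\subset\mathbb{R}^m$ be open with coordinates $q=(q^a,q^\alpha)$, $1\le a\le m-n$, $1\le\alpha\le n$; let $g=(g_{ij})$ be a Riemannian metric on $U$, $V\colon U\to\mathbb{R}$ smooth, $\Gamma^\alpha_a\colon U\to\mathbb{R}$ smooth, and $h>0$. Define $$\mathbb{L}_d(q_0,q_1)=\frac{1}{2h}g_{ij}(q_0)(q_1^i-q_0^i)(q_1^j-q_0^j)-hV(q_0),$$ $$C_d=\{(q_0,q_1)\in U\times U:\ q_1^\alpha-q_0^\alpha=\Gamma^\alpha_a(q_0)(q_1^a-q_0^a),\ 1\le\alpha\le n\},$$ and $L_d=\mathbb{L}_d|_{C_d}$. Let $\gamma_{ab}=g_{ab}+g_{a\alpha}\Gamma^\alpha_b+g_{b\alpha}\Gamma^\alpha_a+g_{\alpha\beta}\Gamma^\alpha_a\Gamma^\beta_b$, $(\gamma^{ab})$ its inverse matrix, and define $H\colon T^*U\to\mathbb{R}$ by $H(q,p)=\frac12\gamma^{ab}(q)P_aP_b+V(q)$ with $P_a=p_a+p_\alpha\Gamma^\alpha_a(q)$. Then the set $\Upsilon(\Sigma_{L_d})\subset T^*U\times T^*U$ coincides with the set of $(q_0,p_0,q_1,p_1)$ satisfying the symplectic Euler scheme $$p_1=p_0-h\frac{\partial H}{\partial q}(q_0,p_1),\qquad q_1=q_0+h\frac{\partial H}{\partial p}(q_0,p_1).$$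
   Context: $\gamma_{ab}$ is invertible since $g$ is Riemannian. For a submanifold $N\subset Q$ and $f\colon N\to\mathbb{R}$, $\Sigma_f=\{\mu\in T^*Q:\ \pi_Q(\mu)\in N,\ \langle\mu,v\rangle=\langle df,v\rangle\ \forall v\in T_{\pi_Q(\mu)}N\}$; $\Sigma_{L_d}\subset T^*(U\times U)$ is this set for $Q=U\times U$, $N=C_d$, $f=L_d$. Concretely, with constraint functions $\phi^\alpha_d(q_0,q_1)=q_1^\alpha-q_0^\alpha-\Gamma^\alpha_a(q_0)(q_1^a-q_0^a)$, $\Sigma_{L_d}$ consists of covectors $(\mu_0,\mu_1)$ at points of $C_d$ with $\mu_0=\partial_{q_0}\mathbb{L}_d+\lambda_\alpha\partial_{q_0}\phi^\alpha_d$, $\mu_1=\partial_{q_1}\mathbb{L}_d+\lambda_\alpha\partial_{q_1}\phi^\alpha_d$ for some multipliers $\lambda_\alpha$. $\Upsilon\colon T^*(U\times U)\to T^*U\times T^*U$ is $\Upsilon(\gamma_{q_0},\gamma_{q_1})=(-\gamma_{q_0},\gamma_{q_1})$ under $T^*_{(q_0,q_1)}(U\times U)\cong T^*_{q_0}U\times T^*_{q_1}U$; points of $T^*U\times T^*U$ are written $(q_0,p_0,q_1,p_1)$. *)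

(* Defs.v *)
From Stdlib Require Import Reals Lra ClassicalEpsilon List.
Import ListNotations.
Open Scope R_scope.

(* Points of R^m are represented as functions nat -> R; only the coordinates
   i < m are meaningful. *)
Definition vec := nat -> R.

Fixpoint sumR (n : nat) (f : nat -> R) : R :=
  match n with O => 0 | S n' => sumR n' f + f n' end.

Definition basis (i : nat) : vec := fun j => if Nat.eqb i j then 1 else 0.
Definition vadd (x y : vec) : vec := fun i => x i + y i.
Definition vscal (t : R) (x : vec) : vec := fun i => t * x i.

Definition is_open (m : nat) (U : vec -> Prop) : Prop :=
  forall x, U x -> exists eps, 0 < eps /\
    forall y, (forall i, (i < m)%nat -> Rabs (y i - x i) < eps) -> U y.

(* f is a function of the first m coordinates only (i.e. a function on R^m). *)
Definition dep_first (m : nat) (f : vec -> R) : Prop :=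
  forall x y, (forall i, (i < m)%nat -> x i = y i) -> f x = f y.

Definition cont_at (m : nat) (f : vec -> R) (x : vec) : Prop :=
  forall eps, 0 < eps -> exists del, 0 < del /\
    forall y, (forall i, (i < m)%nat -> Rabs (y i - x i) < del) ->
      Rabs (f y - f x) < eps.

(* f is smooth (C^infinity) on U: all iterated partial derivatives D l
   (l = list of directions) exist and are continuous on U. *)
Definition smooth_on (m : nat) (U : vec -> Prop) (f : vec -> R) : Prop :=
  exists D : list nat -> vec -> R,
    (forall x, U x -> D nil x = f x) /\
    (forall l i x, (i < m)%nat -> U x ->
       derivable_pt_lim (fun t => D l (vadd x (vscal t (basis i)))) 0 (D (cons i l) x)) /\
    (forall l x, U x -> cont_at m (D l) x).

Definition partial (f : vec -> R) (x : vec) (i : nat) : R :=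
  epsilon (inhabits 0)
    (fun l => derivable_pt_lim (fun t => f (vadd x (vscal t (basis i)))) 0 l).

Definition riemannian (m : nat) (U : vec -> Prop) (g : vec -> nat -> nat -> R) : Prop :=
  (forall i j, (i < m)%nat -> (j < m)%nat ->
     smooth_on m U (fun q => g q i j) /\ dep_first m (fun q => g q i j)) /\
  (forall q i j, U q -> (i < m)%nat -> (j < m)%nat -> g q i j = g q j i) /\
  (forall q (v : vec), U q -> (exists i, (i < m)%nat /\ v i <> 0) ->
     0 < sumR m (fun i => sumR m (fun j => g q i j * v i * v j))).

Definition mat_inv (k : nat) (M : nat -> nat -> R) : nat -> nat -> R :=
  epsilon (inhabits (fun _ _ => 0))
    (fun N => forall a c, (a < k)%nat -> (c < k)%nat ->
       sumR k (fun b => M a b * N b c) = if Nat.eqb a c then 1 else 0).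

(* Index convention: coordinates q^a are indices a < m-n (0-based),
   coordinates q^alpha are indices (m-n)+alpha, alpha < n.
   Gam alpha a q = Gamma^alpha_a(q). *)

Definition LLd (m : nat) (g : vec -> nat -> nat -> R) (V : vec -> R) (h : R)
  (q0 q1 : vec) : R :=
  / (2 * h) * sumR m (fun i => sumR m (fun j =>
      g q0 i j * (q1 i - q0 i) * (q1 j - q0 j))) - h * V q0.

Definition phid (m n : nat) (Gam : nat -> nat -> vec -> R) (al : nat)
  (q0 q1 : vec) : R :=
  q1 ((m - n) + al)%nat - q0 ((m - n) + al)%nat
  - sumR (m - n) (fun a => Gam al a q0 * (q1 a - q0 a)).

Definition Cd (m n : nat) (U : vec -> Prop) (Gam : nat -> nat -> vec -> R)
  (q0 q1 : vec) : Prop :=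
  U q0 /\ U q1 /\ forall al, (al < n)%nat -> phid m n Gam al q0 q1 = 0.

Definition Upsilon_Sigma_Ld (m n : nat) (U : vec -> Prop)
  (g : vec -> nat -> nat -> R) (V : vec -> R) (Gam : nat -> nat -> vec -> R)
  (h : R) (q0 p0 q1 p1 : vec) : Prop :=
  Cd m n U Gam q0 q1 /\
  exists lam : nat -> R,
    forall i, (i < m)%nat ->
      - p0 i = partial (fun x => LLd m g V h x q1) q0 i
               + sumR n (fun al => lam al * partial (fun x => phid m n Gam al x q1) q0 i)
      /\
      p1 i = partial (fun x => LLd m g V h q0 x) q1 i
               + sumR n (fun al => lam al * partial (fun x => phid m n Gam al q0 x) q1 i).

Definition gam_ab (m n : nat) (g : vec -> nat -> nat -> R)
  (Gam : nat -> nat -> vec -> R) (q : vec) (a b : nat) : R :=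
  let k := (m - n)%nat in
  g q a b
  + sumR n (fun al => g q a (k + al)%nat * Gam al b q)
  + sumR n (fun al => g q b (k + al)%nat * Gam al a q)
  + sumR n (fun al => sumR n (fun be =>
       g q (k + al)%nat (k + be)%nat * Gam al a q * Gam be b q)).

Definition Pa (m n : nat) (Gam : nat -> nat -> vec -> R) (q p : vec) (a : nat) : R :=
  p a + sumR n (fun al => p ((m - n) + al)%nat * Gam al a q).

Definition Ham (m n : nat) (g : vec -> nat -> nat -> R) (V : vec -> R)
  (Gam : nat -> nat -> vec -> R) (q p : vec) : R :=
  let k := (m - n)%nat in
  let gi := mat_inv k (gam_ab m n g Gam q) in
  / 2 * sumR k (fun a => sumR k (fun b =>
          gi a b * Pa m n Gam q p a * Pa m n Gam q p b)) + V q.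

Definition symplectic_euler (m n : nat) (U : vec -> Prop)
  (g : vec -> nat -> nat -> R) (V : vec -> R) (Gam : nat -> nat -> vec -> R)
  (h : R) (q0 p0 q1 p1 : vec) : Prop :=
  U q0 /\ U q1 /\
  forall i, (i < m)%nat ->
    p1 i = p0 i - h * partial (fun q => Ham m n g V Gam q p1) q0 i /\
    q1 i = q0 i + h * partial (fun p => Ham m n g V Gam q0 p) p1 i.

(* Main.v *)
Require Import Defs.
From Stdlib Require Import Reals.
From Stdlib Require Import Lra Lia FunctionalExtensionality ClassicalEpsilon Setoid Morphisms.
From mathcomp Require all_boot all_fingroup all_algebra Rstruct.
Open Scope R_scope.

Lemma sumR_ext n f g : (forall i, (i < n)%nat -> f i = g i) -> sumR n f = sumR n g.
Proof. induction n; intros H; simpl; [reflexivity|]. rewrite IHn, H; [reflexivity|lia|]. intros; apply H; lia. Qed.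

Lemma sumR_plus n f g : sumR n (fun i => f i + g i) = sumR n f + sumR n g.
Proof. induction n; simpl; [lra|]. rewrite IHn; lra. Qed.

Lemma sumR_minus n f g : sumR n (fun i => f i - g i) = sumR n f - sumR n g.
Proof. induction n; simpl; [lra|]. rewrite IHn; lra. Qed.

Lemma sumR_opp n f : sumR n (fun i => - f i) = - sumR n f.
Proof. induction n; simpl; [lra|]. rewrite IHn; lra. Qed.

Lemma sumR_scal_l c n f : c * sumR n f = sumR n (fun i => c * f i).
Proof. induction n; simpl; [lra|]. rewrite <- IHn; lra. Qed.

Lemma sumR_scal_r n f c : sumR n f * c = sumR n (fun i => f i * c).
Proof. induction n; simpl; [lra|]. rewrite <- IHn; lra. Qed.

Lemma sumR_zero n : sumR n (fun _ => 0) = 0.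
Proof. induction n; simpl; [lra|]. rewrite IHn; lra. Qed.

Lemma sumR_zero' n f : (forall i, (i < n)%nat -> f i = 0) -> sumR n f = 0.
Proof. intros H. rewrite (sumR_ext n f (fun _ => 0)) by auto. apply sumR_zero. Qed.

Lemma sumR_swap n m (f : nat -> nat -> R) :
  sumR n (fun i => sumR m (f i)) = sumR m (fun j => sumR n (fun i => f i j)).
Proof. induction n; simpl. - rewrite sumR_zero; reflexivity.
  - rewrite IHn, <- sumR_plus. reflexivity. Qed.

Lemma sumR_split k n f : sumR (k + n) f = sumR k f + sumR n (fun a => f (k + a)%nat).
Proof. induction n; simpl. - rewrite Nat.add_0_r; lra.
  - rewrite Nat.add_succ_r; simpl. rewrite IHn; lra. Qed.

Lemma sumR_delta n i f : (i < n)%nat ->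
  sumR n (fun j => if Nat.eqb i j then f j else 0) = f i.
Proof.
  induction n; intros H; [lia|]. simpl. destruct (Nat.eq_dec i n).
  - subst. rewrite sumR_zero'. rewrite Nat.eqb_refl; lra.
    intros j Hj. destruct (Nat.eqb_spec n j); [lia|reflexivity].
  - rewrite IHn by lia. destruct (Nat.eqb_spec i n); [lia|lra].
Qed.

Lemma sumR_delta_out n i f : (n <= i)%nat ->
  sumR n (fun j => if Nat.eqb i j then f j else 0) = 0.
Proof. intros H. apply sumR_zero'. intros j Hj. destruct (Nat.eqb_spec i j); [lia|reflexivity]. Qed.

Definition D0 (f : R -> R) (l : R) := derivable_pt_lim f 0 l.
Definition line (x : vec) (i : nat) (t : R) : vec := vadd x (vscal t (basis i)).
Definition dlt (i j : nat) : R := if Nat.eqb i j then 1 else 0.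

Lemma line_eq x i t j : line x i t j = x j + t * dlt i j.
Proof. reflexivity. Qed.
Lemma line_0 x i : line x i 0 = x.
Proof. apply functional_extensionality. intros j. rewrite line_eq. lra. Qed.

Lemma D0_const c : D0 (fun _ => c) 0.
Proof. apply (derivable_pt_lim_const c 0). Qed.
Lemma D0_id : D0 (fun t => t) 1.
Proof. apply (derivable_pt_lim_id 0). Qed.
Lemma D0_plus f g a b : D0 f a -> D0 g b -> D0 (fun t => f t + g t) (a + b).
Proof. intros; apply (derivable_pt_lim_plus f g 0 a b); auto. Qed.
Lemma D0_minus f g a b : D0 f a -> D0 g b -> D0 (fun t => f t - g t) (a - b).
Proof. intros; apply (derivable_pt_lim_minus f g 0 a b); auto. Qed.
Lemma D0_opp f a : D0 f a -> D0 (fun t => - f t) (- a).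
Proof. intros; apply (derivable_pt_lim_opp f 0 a); auto. Qed.
Lemma D0_mult f g a b : D0 f a -> D0 g b -> D0 (fun t => f t * g t) (a * g 0 + f 0 * b).
Proof. intros; apply (derivable_pt_lim_mult f g 0 a b); auto. Qed.
Lemma D0_div f g a b : D0 f a -> D0 g b -> g 0 <> 0 ->
  D0 (fun t => f t / g t) ((a * g 0 - b * f 0) / (g 0)²).
Proof. intros; apply (derivable_pt_lim_div f g 0 a b); auto. Qed.
Lemma D0_ext f g a : (forall t, f t = g t) -> D0 f a -> D0 g a.
Proof. intros H. replace g with f; auto. apply functional_extensionality; auto. Qed.
Lemma D0_eqd f a b : a = b -> D0 f a -> D0 f b.
Proof. intros ->; auto. Qed.
Lemma D0_unique f a b : D0 f a -> D0 f b -> a = b.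
Proof. apply uniqueness_limite. Qed.

Lemma D0_sumR n F dF : (forall j, (j < n)%nat -> D0 (F j) (dF j)) ->
  D0 (fun t => sumR n (fun j => F j t)) (sumR n dF).
Proof.
  induction n; intros H; simpl.
  - apply D0_const.
  - apply D0_plus. apply IHn; intros; apply H; lia. apply H; lia.
Qed.

Lemma D0_loc f g a d : 0 < d -> (forall t, Rabs t < d -> f t = g t) -> D0 f a -> D0 g a.
Proof.
  intros Hd Heq Hf eps He. destruct (Hf eps He) as [del Hdel].
  assert (Hm : 0 < Rmin del d) by (apply Rmin_pos; [apply cond_pos|lra]).
  exists (mkposreal _ Hm). intros hh Hh0 Hhd. simpl in Hhd.
  rewrite <- !Heq. apply Hdel; auto.
  apply Rlt_le_trans with (1 := Hhd); apply Rmin_l.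
  rewrite Rabs_R0; lra.
  rewrite Rplus_0_l. apply Rlt_le_trans with (1 := Hhd); apply Rmin_r.
Qed.

Lemma partial_eq f x i l : D0 (fun t => f (line x i t)) l -> partial f x i = l.
Proof.
  intros H. unfold partial.
  assert (Hs := epsilon_spec (inhabits 0)
    (fun l => derivable_pt_lim (fun t => f (vadd x (vscal t (basis i)))) 0 l)
    (ex_intro _ l H)).
  apply (uniqueness_limite _ _ _ _ Hs H).
Qed.

Lemma D0_eqd' f a b : D0 f a -> a = b -> D0 f b.
Proof. intros H ->; auto. Qed.

Ltac dtree := first
  [ apply D0_const | apply D0_id
  | apply D0_plus; dtree | apply D0_minus; dtree | apply D0_opp; dtree
  | apply D0_mult; dtree
  | apply D0_sumR; let j := fresh "j" in let Hj := fresh "Hj" in intros j Hj; dtree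
  | idtac ].
Ltac dcalc := eapply D0_eqd'; [dtree|cbv beta].

Lemma D0_coord x i j : D0 (fun t => line x i t j) (dlt i j).
Proof.
  apply D0_ext with (f := fun t => x j + t * dlt i j); [intros; reflexivity|].
  dcalc. ring.
Qed.

Lemma open_line m U x i : is_open m U -> U x ->
  exists d, 0 < d /\ forall t, Rabs t < d -> U (line x i t).
Proof.
  intros HU Hx. destruct (HU x Hx) as [e [He H]]. exists e; split; auto.
  intros t Ht. apply H. intros j Hj. rewrite line_eq.
  replace (x j + t * dlt i j - x j) with (t * dlt i j) by ring.
  unfold dlt; destruct (Nat.eqb i j); [rewrite Rmult_1_r; auto|rewrite Rmult_0_r, Rabs_R0; lra].
Qed.

Lemma smooth_D0 m U f x i : is_open m U -> smooth_on m U f -> U x -> (i < m)%nat ->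
  D0 (fun t => f (line x i t)) (partial f x i).
Proof.
  intros HU [D [H0 [H1 H2]]] Hx Hi.
  destruct (open_line m U x i HU Hx) as [d [Hd Hl]].
  assert (HD : D0 (fun t => f (line x i t)) (D (cons i nil) x)).
  { apply D0_loc with (f := fun t => D nil (line x i t)) (d := d);
      [exact Hd | intros t Ht; apply H0, Hl, Ht | apply H1; auto]. }
  rewrite (partial_eq _ _ _ _ HD). exact HD.
Qed.


Definition PD (k : nat) (M : nat -> nat -> R) : Prop :=
  forall v : vec, (exists a, (a < k)%nat /\ v a <> 0) ->
    0 < sumR k (fun a => sumR k (fun b => M a b * v a * v b)).

Definition inv_spec (k : nat) (M N : nat -> nat -> R) : Prop :=
  forall a c, (a < k)%nat -> (c < k)%nat ->
       sumR k (fun b => M a b * N b c) = if Nat.eqb a c then 1 else 0.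

Definition stmt_exists := forall k M, PD k M -> exists N, inv_spec k M N.

Definition stmt_D0 := forall k (M : R -> nat -> nat -> R) d, 0 < d ->
  (forall t, Rabs t < d -> PD k (M t)) ->
  (forall a b, (a < k)%nat -> (b < k)%nat -> exists l, D0 (fun t => M t a b) l) ->
  forall a b, (a < k)%nat -> (b < k)%nat -> exists l, D0 (fun t => mat_inv k (M t) a b) l.

Module MC.
Import all_boot all_fingroup all_algebra Rstruct.
Import GRing.Theory.
Local Open Scope ring_scope.
Local Set Implicit Arguments.

Lemma sumR_big n f : sumR n f = \sum_(i < n) f i.
Proof.
elim: n => [|n IH]; first by rewrite big_ord0.
by rewrite big_ord_recr /= -IH RplusE.
Qed.

Definition Mx k (M : nat -> nat -> R) : 'M[R]_k := \matrix_(a, b) M a b.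

Definition wv k (v : 'rV[R]_k) : vec :=
  fun j => if (insub j : option 'I_k) is Some a then v 0 a else 0.
Arguments wv {k} v j.

Lemma wvE k (v : 'rV[R]_k) (a : 'I_k) : wv v a = v 0 a.
Proof. by rewrite /wv valK. Qed.

Lemma PD_det k M : PD k M -> \det (Mx k M) != 0.
Proof.
move=> HPD; apply/negP => /det0P [v vnz vM].
have [j vj] : exists j, v 0 j != 0.
  case/boolP: [exists j, v 0 j != 0] => [/existsP//|/existsPn H].
  case/negP: vnz; apply/eqP/rowP => j; rewrite !mxE; apply/eqP.
  by move: (H j); rewrite negbK.
have H1 := HPD (wv v).
have : Rlt 0 (sumR k (fun a => sumR k (fun b => Rmult (Rmult (M a b) (wv v a)) (wv v b)))).
  apply: H1; exists j; split; first by apply/ltP.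
  by rewrite wvE; apply/eqP.
rewrite sumR_big.
rewrite (eq_bigr (fun a : 'I_k => \sum_(b < k) M a b * v 0 a * v 0 b)); last first.
  by move=> a _; rewrite sumR_big; apply: eq_bigr => b _; rewrite !wvE !RmultE.
rewrite exchange_big /=.
rewrite (eq_bigr (fun b : 'I_k => (v *m Mx k M) 0 b * v 0 b)); last first.
  move=> b _; rewrite !mxE mulr_suml; apply: eq_bigr => a _; rewrite mxE.
  by rewrite [M a b * _]mulrC.
rewrite vM (eq_bigr (fun _ => 0)); last by move=> b _; rewrite mxE mul0r.
by rewrite big1_eq => /Rlt_irrefl.
Qed.

Lemma unit_Mx k M : PD k M -> Mx k M \in unitmx.
Proof. by move=> H; rewrite unitmxE unitfE PD_det. Qed.

Definition N0 k M : nat -> nat -> R := fun a b =>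
  match (insub a : option 'I_k), (insub b : option 'I_k) with
  | Some a', Some b' => invmx (Mx k M) a' b' | _, _ => 0 end.

Lemma ord_of k a : (a < k)%coq_nat -> exists a' : 'I_k, nat_of_ord a' = a.
Proof. by move=> /ltP H; exists (Ordinal H). Qed.

Lemma eqb_ord k (a c : 'I_k) : (if Nat.eqb a c then R1 else R0) = (1%:M : 'M[R]_k) a c.
Proof.
rewrite mxE; case: (Nat.eqb_spec a c) => [/val_inj ->| Hne]; first by rewrite eqxx.
by rewrite (introF eqP) // => E; apply: Hne; rewrite E.
Qed.

Lemma N0_spec k M : PD k M -> inv_spec k M (N0 k M).
Proof.
move=> HPD a c Ha Hc.
have [a' <-] := ord_of Ha; have [c' <-] := ord_of Hc.
rewrite sumR_big eqb_ord -(mulmxV (unit_Mx HPD)) mxE.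
by apply: eq_bigr => b _; rewrite /N0 !valK !mxE RmultE.
Qed.

Lemma spec_uniq k M N : PD k M -> inv_spec k M N ->
  forall a b : 'I_k, N a b = invmx (Mx k M) a b.
Proof.
move=> HPD HN.
set Nx := \matrix_(a < k, b < k) N a b.
have E : Mx k M *m Nx = 1%:M.
  apply/matrixP => a c; rewrite -eqb_ord -(HN a c) ?sumR_big; try by apply/ltP.
  by rewrite mxE; apply: eq_bigr => b _; rewrite !mxE RmultE.
have E2 : Nx = invmx (Mx k M).
  by rewrite -[Nx](mulKmx (unit_Mx HPD)) E mulmx1.
by move=> a b; have := congr1 (fun X : 'M[R]_k => X a b) E2; rewrite mxE.
Qed.

Lemma mat_inv_spec_pf k M : PD k M -> inv_spec k M (mat_inv k M).
Proof.
move=> HPD.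
exact: (epsilon_spec (inhabits (fun _ _ => R0)) (fun N => inv_spec k M N)
           (ex_intro _ (N0 k M) (N0_spec HPD))).
Qed.

Lemma mat_inv_mx k M : PD k M -> forall a b : 'I_k, mat_inv k M a b = invmx (Mx k M) a b.
Proof. move=> HPD; apply: spec_uniq => //; exact: mat_inv_spec_pf. Qed.

Lemma D0e_ext f g : (forall t, f t = g t) -> (exists l, D0 f l) -> exists l, D0 g l.
Proof. by move=> E [l H]; exists l; apply: D0_ext E H. Qed.

Arguments D0e_ext {f g}.
Lemma D0e_const c : exists l, D0 (fun _ => c) l.
Proof. by exists R0; apply: D0_const. Qed.

Lemma D0e_add f g : (exists l, D0 f l) -> (exists l, D0 g l) -> exists l, D0 (fun t => f t + g t) l.
Proof. by move=> [a Ha] [b Hb]; exists (Rplus a b); exact: (D0_plus _ _ _ _ Ha Hb). Qed.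

Lemma D0e_mul f g : (exists l, D0 f l) -> (exists l, D0 g l) -> exists l, D0 (fun t => f t * g t) l.
Proof. by move=> [a Ha] [b Hb]; eexists; exact: (D0_mult _ _ _ _ Ha Hb). Qed.

Lemma D0_bigsum (I : Type) (r : seq I) (P : pred I) (F : I -> R -> R) :
  (forall i, exists l, D0 (F i) l) -> exists l, D0 (fun t => \sum_(i <- r | P i) F i t) l.
Proof.
move=> H; elim: r => [|i r IH].
  apply: (D0e_ext (f := fun _ => R0)); last exact: D0e_const. by move=> t; rewrite big_nil.
case Pi: (P i).
  by apply: (D0e_ext _ (D0e_add (H i) IH)) => t; rewrite big_cons Pi.
by apply: (D0e_ext _ IH) => t; rewrite big_cons Pi.
Qed.

Lemma D0_bigprod (I : Type) (r : seq I) (P : pred I) (F : I -> R -> R) :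
  (forall i, exists l, D0 (F i) l) -> exists l, D0 (fun t => \prod_(i <- r | P i) F i t) l.
Proof.
move=> H; elim: r => [|i r IH].
  by apply: (D0e_ext _ (D0e_const R1)) => t; rewrite big_nil.
case Pi: (P i).
  by apply: (D0e_ext _ (D0e_mul (H i) IH)) => t; rewrite big_cons Pi.
by apply: (D0e_ext _ IH) => t; rewrite big_cons Pi.
Qed.

Lemma det_D0 n (A : R -> 'M[R]_n) :
  (forall i j, exists l, D0 (fun t => A t i j) l) -> exists l, D0 (fun t => \det (A t)) l.
Proof.
move=> H.
apply: (D0e_ext (f := fun t => \sum_(s : 'S_n) ((-1) ^+ s * \prod_i A t i (s i)))) => //.
apply: D0_bigsum => s; apply: D0e_mul; first exact: D0e_const.
by apply: D0_bigprod => i; apply: H.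
Qed.

Lemma adj_D0 n (A : R -> 'M[R]_n) :
  (forall i j, exists l, D0 (fun t => A t i j) l) ->
  forall i j, exists l, D0 (fun t => \adj (A t) i j) l.
Proof.
move=> H i j.
apply: (D0e_ext (f := fun t => (-1) ^+ (j + i) * \det (row' j (col' i (A t))))).
  by move=> t; rewrite mxE.
apply: D0e_mul; first exact: D0e_const.
apply: det_D0 => x y.
by apply: (D0e_ext _ (H (lift j x) (lift i y))) => t; rewrite !mxE.
Qed.

Lemma mat_inv_D0_pf : stmt_D0.
Proof.
move=> k M d Hd HPD HM a b Ha Hb.
have [a' <-] := ord_of Ha; have [b' <-] := ord_of Hb.
have HMx : forall i j : 'I_k, exists l, D0 (fun t => Mx k (M t) i j) l.
  by move=> i j; apply: (D0e_ext _ (HM i j _ _)); [move=> t; rewrite mxE | apply/ltP | apply/ltP].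
have [la Hla] := adj_D0 (fun t => Mx k (M t)) HMx a' b'.
have [ld Hld] := det_D0 (fun t => Mx k (M t)) HMx.
have P0 : PD k (M R0) by apply: HPD; rewrite Rabs_R0.
have Hnz : \det (Mx k (M R0)) <> 0.
  by move=> E; move: (PD_det P0); rewrite E eqxx.
eexists; apply: (D0_loc _ _ _ _ Hd _ (D0_div _ _ _ _ Hla Hld Hnz)).
move=> t Ht /=; rewrite mat_inv_mx; last exact: HPD.
rewrite /invmx unit_Mx; last exact: HPD.
by rewrite [RHS]mxE mulrC /Rdiv.
Qed.

Lemma mat_inv_exists_pf : stmt_exists.
Proof. by move=> k M HPD; exists (mat_inv k M); apply: mat_inv_spec_pf. Qed.
End MC.

Lemma mat_inv_spec k M : PD k M -> inv_spec k M (mat_inv k M).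
Proof. exact (@MC.mat_inv_spec_pf k M). Qed.
Lemma mat_inv_D0 : stmt_D0.
Proof. exact MC.mat_inv_D0_pf. Qed.


#[global] Instance sumR_proper : Proper (eq ==> pointwise_relation nat eq ==> eq) sumR.
Proof. intros n1 n2 -> f1 f2 Hf. apply sumR_ext; intros; apply Hf. Qed.

Ltac clean0 := repeat (setoid_rewrite Rmult_0_l || setoid_rewrite Rmult_0_r
  || setoid_rewrite Rplus_0_l || setoid_rewrite Rplus_0_r || setoid_rewrite Rminus_0_r
  || setoid_rewrite Rmult_1_l || setoid_rewrite Rmult_1_r || setoid_rewrite sumR_zero).

Ltac dext := fail.
Ltac dtr := first [ apply D0_const | apply D0_id | apply D0_coord | dext
  | apply D0_plus; dtr | apply D0_minus; dtr | apply D0_opp; dtr | apply D0_mult; dtr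
  | apply D0_sumR; let j := fresh "j" in let Hj := fresh "Hj" in intros j Hj; dtr | idtac ].
Ltac dcal := eapply D0_eqd'; [dtr | cbv beta].

Definition liftG (k : nat) (s : R) (Gm : nat -> nat -> R) (u : nat -> R) (j : nat) : R :=
  if Nat.ltb j k then s * u j else sumR k (fun a => Gm (j - k)%nat a * u a).

Lemma liftG_lo k s Gm u j : (j < k)%nat -> liftG k s Gm u j = s * u j.
Proof. intros H; unfold liftG. destruct (Nat.ltb_spec j k); [reflexivity|lia]. Qed.
Lemma liftG_hi k s Gm u al : liftG k s Gm u (k + al) = sumR k (fun a => Gm al a * u a).
Proof. unfold liftG. destruct (Nat.ltb_spec (k+al) k); [lia|].
  replace (k + al - k)%nat with al by lia. reflexivity. Qed.

Lemma sumR_prod n m f g : sumR n f * sumR m g = sumR n (fun i => sumR m (fun j => f i * g j)).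
Proof. rewrite sumR_scal_r. apply sumR_ext; intros. rewrite sumR_scal_l. reflexivity. Qed.

Ltac sum_in := repeat (match goal with
 | |- context [sumR ?n ?f * sumR ?m ?g] => rewrite (sumR_prod n m f g)
 | |- context [?c * sumR ?n ?f] =>
     lazymatch c with context [sumR _ _] => fail | _ => rewrite (sumR_scal_l c n f) end
 | |- context [sumR ?n ?f * ?c] =>
     lazymatch c with context [sumR _ _] => fail | _ => rewrite (sumR_scal_r n f c) end
 end).
Ltac sumx := repeat (rewrite Rmult_plus_distr_l || rewrite Rmult_plus_distr_r); sum_in;
  first [ring
        | match goal with |- _ + _ = _ + _ => apply (f_equal2 Rplus); sumx end
        | apply sumR_ext; let i := fresh "i" in let Hi := fresh "Hi" in intros i Hi; cbv beta; sumx].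

Lemma lift_bilin k n (A : nat -> nat -> R) s1 s2 G1 G2 u v :
  sumR (k + n) (fun j => sumR (k + n) (fun l =>
     A j l * liftG k s1 G1 u j * liftG k s2 G2 v l))
  = sumR k (fun c => sumR k (fun d =>
      (s1 * s2 * A c d
       + s1 * sumR n (fun al => A c (k + al)%nat * G2 al d)
       + s2 * sumR n (fun al => A (k + al)%nat d * G1 al c)
       + sumR n (fun al => sumR n (fun be => A (k + al)%nat (k + be)%nat * G1 al c * G2 be d)))
      * u c * v d)).
Proof.
  rewrite sumR_split.
  rewrite (sumR_ext k _ (fun j => sumR k (fun l => s1 * s2 * A j l * u j * v l)
       + sumR n (fun be => s1 * u j * sumR k (fun d => A j (k+be)%nat * G2 be d * v d)))).
  2:{ intros j Hj. rewrite sumR_split. f_equal.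
      - apply sumR_ext; intros l Hl. rewrite !liftG_lo by lia. ring.
      - apply sumR_ext; intros be Hbe. rewrite liftG_hi. rewrite liftG_lo by lia.
        sumx. }
  rewrite (sumR_ext n _ (fun al => sumR k (fun l => s2 * v l * sumR k (fun c => A (k+al)%nat l * G1 al c * u c))
       + sumR n (fun be => sumR k (fun c => sumR k (fun d =>
            A (k+al)%nat (k+be)%nat * G1 al c * G2 be d * u c * v d))))).
  2:{ intros al Hal. rewrite sumR_split. f_equal.
      - apply sumR_ext; intros l Hl. rewrite liftG_hi. rewrite liftG_lo by lia. sumx.
      - apply sumR_ext; intros be Hbe. rewrite !liftG_hi. sumx. }
  rewrite sumR_plus, sumR_plus.
  match goal with |- _ = sumR k ?F => rewrite (sumR_ext k F (fun c =>
     sumR k (fun d => s1 * s2 * A c d * u c * v d)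
     + sumR k (fun d => sumR n (fun al => s1 * A c (k+al)%nat * G2 al d * u c * v d))
     + sumR k (fun d => sumR n (fun al => s2 * A (k+al)%nat d * G1 al c * u c * v d))
     + sumR k (fun d => sumR n (fun al => sumR n (fun be =>
            A (k+al)%nat (k+be)%nat * G1 al c * G2 be d * u c * v d)))))
  end.
  2:{ intros c Hc. cbv beta. rewrite <- !sumR_plus. apply sumR_ext; intros d Hd.
      sumx. }
  rewrite !sumR_plus.
  assert (E2 : sumR k (fun j => sumR n (fun be => s1 * u j * sumR k (fun d => A j (k+be)%nat * G2 be d * v d)))
     = sumR k (fun c => sumR k (fun d => sumR n (fun al => s1 * A c (k+al)%nat * G2 al d * u c * v d)))).
  { apply sumR_ext; intros c Hc. rewrite sumR_swap. sumx. }
  assert (E3 : sumR n (fun al => sumR k (fun l => s2 * v l * sumR k (fun c => A (k+al)%nat l * G1 al c * u c)))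
     = sumR k (fun c => sumR k (fun d => sumR n (fun al => s2 * A (k+al)%nat d * G1 al c * u c * v d)))).
  { rewrite sumR_swap. symmetry. rewrite sumR_swap. apply sumR_ext; intros d Hd.
    rewrite sumR_swap. sumx. }
  assert (E4 : sumR n (fun al => sumR n (fun be => sumR k (fun c => sumR k (fun d =>
            A (k+al)%nat (k+be)%nat * G1 al c * G2 be d * u c * v d))))
     = sumR k (fun c => sumR k (fun d => sumR n (fun al => sumR n (fun be =>
            A (k+al)%nat (k+be)%nat * G1 al c * G2 be d * u c * v d))))).
  { rewrite (sumR_ext n _ (fun al => sumR k (fun c => sumR n (fun be => sumR k (fun d =>
            A (k+al)%nat (k+be)%nat * G1 al c * G2 be d * u c * v d))))).
    2:{ intros al Hal. apply sumR_swap. }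
    rewrite sumR_swap. apply sumR_ext; intros c Hc.
    rewrite (sumR_ext n _ (fun al => sumR k (fun d => sumR n (fun be =>
            A (k+al)%nat (k+be)%nat * G1 al c * G2 be d * u c * v d)))).
    2:{ intros al Hal. apply sumR_swap. }
    apply sumR_swap. }
  rewrite E2, E3, E4. ring.
Qed.

Lemma sumR_dlt n i f : (i < n)%nat -> sumR n (fun j => dlt i j * f j) = f i.
Proof. intros H. rewrite <- (sumR_delta n i f H). apply sumR_ext; intros j Hj.
  unfold dlt. destruct (Nat.eqb i j); ring. Qed.
Lemma sumR_dlt_out n i f : (n <= i)%nat -> sumR n (fun j => dlt i j * f j) = 0.
Proof. intros H. apply sumR_zero'. intros j Hj. unfold dlt. destruct (Nat.eqb_spec i j); [lia|ring]. Qed.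
Lemma dlt_sym i j : dlt i j = dlt j i.
Proof. unfold dlt. rewrite Nat.eqb_sym. reflexivity. Qed.

Section Main.
Variables (m n : nat) (U : vec -> Prop) (g : vec -> nat -> nat -> R)
  (V : vec -> R) (Gam : nat -> nat -> vec -> R) (h : R).
Hypothesis Hnm : (n <= m)%nat.
Hypothesis HU : is_open m U.
Hypothesis Hg : riemannian m U g.
Hypothesis HV : smooth_on m U V.
Hypothesis HGam : forall al a, (al < n)%nat -> (a < m - n)%nat ->
     smooth_on m U (Gam al a) /\ dep_first m (Gam al a).
Hypothesis Hh : 0 < h.

Local Notation k := (m - n)%nat.

Lemma sumR_m f : sumR m f = sumR k f + sumR n (fun al => f (k + al)%nat).
Proof. rewrite <- sumR_split. f_equal. lia. Qed.

Lemma g_sym q a b : U q -> (a < m)%nat -> (b < m)%nat -> g q a b = g q b a.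
Proof. intros. destruct Hg as [_ [Hs _]]. auto. Qed.

Lemma gam_quad q (u v : vec) : U q ->
  sumR k (fun c => sumR k (fun d => gam_ab m n g Gam q c d * u c * v d))
  = sumR m (fun j => sumR m (fun l =>
      g q j l * liftG k 1 (fun al a => Gam al a q) u j * liftG k 1 (fun al a => Gam al a q) v l)).
Proof.
  intros Hq.
  transitivity (sumR (k + n) (fun j => sumR (k + n) (fun l =>
      g q j l * liftG k 1 (fun al a => Gam al a q) u j * liftG k 1 (fun al a => Gam al a q) v l))).
  2:{ replace (k + n)%nat with m by lia. reflexivity. }
  rewrite lift_bilin. apply sumR_ext; intros c Hc. apply sumR_ext; intros d Hd.
  unfold gam_ab. cbv zeta. f_equal. f_equal. rewrite !Rmult_1_l.
  f_equal. f_equal. apply sumR_ext; intros al Hal. rewrite (g_sym q d) by (auto; lia). reflexivity.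
Qed.

Lemma gam_PD q : U q -> PD k (gam_ab m n g Gam q).
Proof.
  intros Hq v [a [Ha Hva]].
  rewrite gam_quad by auto.
  destruct Hg as [_ [_ Hpd]]. apply Hpd; auto.
  exists a; split; [lia|]. rewrite liftG_lo by lia. lra.
Qed.

Lemma gam_sym q a b : U q -> (a < k)%nat -> (b < k)%nat ->
  gam_ab m n g Gam q a b = gam_ab m n g Gam q b a.
Proof.
  intros Hq Ha Hb. unfold gam_ab; cbv zeta.
  rewrite (g_sym q a b) by (auto; lia).
  rewrite (sumR_swap n n (fun al be => g q (k + al)%nat (k + be)%nat * Gam al a q * Gam be b q)).
  rewrite (sumR_ext n (fun be => sumR n (fun al => g q (k + al)%nat (k + be)%nat * Gam al a q * Gam be b q))
      (fun al => sumR n (fun be => g q (k + al)%nat (k + be)%nat * Gam al b q * Gam be a q))).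
  ring.
  intros al Hal. apply sumR_ext; intros be Hbe. rewrite (g_sym q (k+be)%nat) by (auto; lia). ring.
Qed.

Section Point.
Variables q0 q1 p1 : vec.
Hypothesis HU0 : U q0.

Definition G j l := g q0 j l.
Definition Gm al a := Gam al a q0.
Definition gm a b := gam_ab m n g Gam q0 a b.
Definition N := mat_inv k gm.
Definition P a := Pa m n Gam q0 p1 a.
Definition y a := sumR k (fun b => N a b * P b).
Definition Dl j := q1 j - q0 j.

Lemma gm_sym a b : (a < k)%nat -> (b < k)%nat -> gm a b = gm b a.
Proof. intros; unfold gm; apply gam_sym; auto. Qed.

Lemma N_spec : inv_spec k gm N.
Proof. apply mat_inv_spec. apply gam_PD; auto. Qed.

Lemma N_sym a b : (a < k)%nat -> (b < k)%nat -> N a b = N b a.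
Proof.
  intros Ha Hb.
  transitivity (sumR k (fun d => sumR k (fun c => N c a * gm c d * N d b))).
  - rewrite <- (sumR_delta k a (fun d => N d b)) by auto.
    apply sumR_ext; intros d Hd.
    rewrite (sumR_ext k _ (fun c => N d b * (gm d c * N c a))).
    2:{ intros c Hc. rewrite (gm_sym c d) by auto. ring. }
    rewrite <- sumR_scal_l. rewrite N_spec by auto.
    destruct (Nat.eqb_spec a d), (Nat.eqb_spec d a); try lia; ring.
  - rewrite sumR_swap. rewrite <- (sumR_delta k b (fun c => N c a)) by auto.
    apply sumR_ext; intros c Hc.
    rewrite (sumR_ext k _ (fun d => N c a * (gm c d * N d b))) by (intros; ring).
    rewrite <- (sumR_scal_l (N c a)).
    rewrite N_spec by auto.
    destruct (Nat.eqb_spec b c), (Nat.eqb_spec c b); try lia; ring.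
Qed.

Lemma N_left a c : (a < k)%nat -> (c < k)%nat ->
  sumR k (fun b => N a b * gm b c) = if Nat.eqb a c then 1 else 0.
Proof.
  intros Ha Hc. rewrite (sumR_ext k _ (fun b => gm c b * N b a)).
  2:{ intros b Hb. rewrite N_sym, gm_sym by auto. ring. }
  rewrite N_spec by auto. rewrite Nat.eqb_sym. reflexivity.
Qed.


Lemma D0_gq i a b : (i < m)%nat -> (a < m)%nat -> (b < m)%nat ->
  D0 (fun t => g (line q0 i t) a b) (partial (fun q => g q a b) q0 i).
Proof. intros Hi Ha Hb. destruct Hg as [Hsm _]. destruct (Hsm a b Ha Hb) as [Hs _].
  exact (smooth_D0 m U (fun q => g q a b) q0 i HU Hs HU0 Hi). Qed.
Lemma D0_Gq i al a : (i < m)%nat -> (al < n)%nat -> (a < k)%nat ->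
  D0 (fun t => Gam al a (line q0 i t)) (partial (Gam al a) q0 i).
Proof. intros Hi Hal Ha. destruct (HGam al a Hal Ha) as [Hs _].
  exact (smooth_D0 m U (Gam al a) q0 i HU Hs HU0 Hi). Qed.
Lemma D0_Vq i : (i < m)%nat -> D0 (fun t => V (line q0 i t)) (partial V q0 i).
Proof. intros Hi. exact (smooth_D0 m U V q0 i HU HV HU0 Hi). Qed.

Ltac dext ::= first [ apply D0_gq; lia | apply D0_Gq; lia | apply D0_Vq; lia ].

Definition dG i a b := partial (fun q => g q a b) q0 i.
Definition dGm i al a := partial (Gam al a) q0 i.
Definition dgamE i a b := dG i a b
  + sumR n (fun al => dG i a (k+al)%nat * Gm al b + G a (k+al)%nat * dGm i al b)
  + sumR n (fun al => dG i b (k+al)%nat * Gm al a + G b (k+al)%nat * dGm i al a)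
  + sumR n (fun al => sumR n (fun be =>
       (dG i (k+al)%nat (k+be)%nat * Gm al a + G (k+al)%nat (k+be)%nat * dGm i al a) * Gm be b
       + G (k+al)%nat (k+be)%nat * Gm al a * dGm i be b)).

Lemma D0_gam i a b : (i < m)%nat -> (a < k)%nat -> (b < k)%nat ->
  D0 (fun t => gam_ab m n g Gam (line q0 i t) a b) (dgamE i a b).
Proof.
  intros Hi Ha Hb. unfold gam_ab; cbv zeta. dcal. rewrite line_0. reflexivity.
Qed.

Definition dN i a b := epsilon (inhabits 0)
  (fun l => D0 (fun t => mat_inv k (gam_ab m n g Gam (line q0 i t)) a b) l).

Lemma D0_Nq i a b : (i < m)%nat -> (a < k)%nat -> (b < k)%nat ->
  D0 (fun t => mat_inv k (gam_ab m n g Gam (line q0 i t)) a b) (dN i a b).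
Proof.
  intros Hi Ha Hb. unfold dN. apply epsilon_spec.
  destruct (open_line m U q0 i HU HU0) as [d [Hd Hl]].
  apply (mat_inv_D0 k (fun t => gam_ab m n g Gam (line q0 i t)) d Hd); auto.
  - intros t Ht. apply gam_PD. apply Hl; auto.
  - intros a' b' Ha' Hb'. exists (dgamE i a' b'). apply D0_gam; auto.
Qed.

Ltac dext ::= first [ apply D0_gq; lia | apply D0_Gq; lia | apply D0_Vq; lia
                    | apply D0_Nq; lia | apply D0_gam; lia ].

Lemma dspec i a c : (i < m)%nat -> (a < k)%nat -> (c < k)%nat ->
  sumR k (fun b => dgamE i a b * N b c + gm a b * dN i b c) = 0.
Proof.
  intros Hi Ha Hc.
  assert (H1 : D0 (fun t => sumR k (fun b => gam_ab m n g Gam (line q0 i t) a b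
                   * mat_inv k (gam_ab m n g Gam (line q0 i t)) b c))
                  (sumR k (fun b => dgamE i a b * N b c + gm a b * dN i b c))).
  { dcal. rewrite line_0. reflexivity. }
  destruct (open_line m U q0 i HU HU0) as [d [Hd Hl]].
  assert (H2 : D0 (fun t => sumR k (fun b => gam_ab m n g Gam (line q0 i t) a b
                   * mat_inv k (gam_ab m n g Gam (line q0 i t)) b c)) 0).
  { apply D0_loc with (f := fun _ => if Nat.eqb a c then 1 else 0) (d := d); auto.
    - intros t Ht. symmetry. apply mat_inv_spec; auto. apply gam_PD; auto.
    - apply D0_const. }
  exact (D0_unique _ _ _ H1 H2).
Qed.

Definition dP i a := sumR n (fun al => p1 (k + al)%nat * dGm i al a).

Lemma dHq_eq i : (i < m)%nat ->
  partial (fun q => Ham m n g V Gam q p1) q0 i =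
  / 2 * sumR k (fun a => sumR k (fun b =>
      (dN i a b * P a + N a b * dP i a) * P b + N a b * P a * dP i b)) + partial V q0 i.
Proof.
  intros Hi. apply partial_eq. unfold Ham, Pa. cbv zeta. dcal. rewrite line_0. clean0.
  unfold P, Pa, dP, N, gm, dGm. reflexivity.
Qed.

Lemma quad_dlt i : (i < m)%nat ->
  sumR m (fun j => sumR m (fun l =>
     g q0 j l * dlt i j * (q1 l - q0 l) + g q0 j l * (q1 j - q0 j) * dlt i l))
  = 2 * sumR m (fun j => G i j * Dl j).
Proof.
  intros Hi.
  rewrite (sumR_ext m _ (fun j => dlt i j * sumR m (fun l => g q0 j l * (q1 l - q0 l))
                                 + sumR m (fun l => dlt i l * (g q0 j l * (q1 j - q0 j))))).
  2:{ intros j Hj. rewrite sumR_scal_l, <- sumR_plus. apply sumR_ext; intros; ring. }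
  rewrite sumR_plus.
  rewrite (sumR_dlt m i (fun j => sumR m (fun l => g q0 j l * (q1 l - q0 l)))) by auto.
  rewrite (sumR_ext m (fun j => sumR m (fun l => dlt i l * (g q0 j l * (q1 j - q0 j))))
     (fun j => G i j * Dl j)).
  2:{ intros j Hj. cbv beta. rewrite (sumR_dlt m i (fun l => g q0 j l * (q1 j - q0 j))) by auto. unfold G, Dl. rewrite (g_sym q0 j i) by auto. ring. }
  unfold G, Dl. ring.
Qed.

Lemma dLq1_eq i : (i < m)%nat ->
  partial (fun x => LLd m g V h q0 x) q1 i = / h * sumR m (fun j => G i j * Dl j).
Proof.
  intros Hi. apply partial_eq. unfold LLd. dcal. rewrite line_0. clean0.
  rewrite quad_dlt by auto. field. lra.
Qed.

Lemma dLq0_eq i : (i < m)%nat ->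
  partial (fun x => LLd m g V h x q1) q0 i =
  / (2 * h) * sumR m (fun j => sumR m (fun l => dG i j l * Dl j * Dl l))
  - / h * sumR m (fun j => G i j * Dl j) - h * partial V q0 i.
Proof.
  intros Hi. apply partial_eq. unfold LLd. dcal. rewrite line_0. clean0.
  rewrite (sumR_ext m _ (fun j => sumR m (fun l => dG i j l * Dl j * Dl l)
      - sumR m (fun l => g q0 j l * dlt i j * (q1 l - q0 l) + g q0 j l * (q1 j - q0 j) * dlt i l))).
  2:{ intros j Hj. rewrite <- sumR_minus. apply sumR_ext; intros. unfold dG, Dl. ring. }
  rewrite sumR_minus, quad_dlt by auto. field. lra.
Qed.

Lemma dphiq1_eq al i : (i < m)%nat -> (al < n)%nat ->
  partial (fun x => phid m n Gam al q0 x) q1 i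
  = dlt i (k + al)%nat - sumR k (fun a => Gm al a * dlt i a).
Proof.
  intros Hi Hal. apply partial_eq. unfold phid. dcal. clean0.
  unfold Gm, Rminus. reflexivity.
Qed.

Lemma dphiq0_eq al i : (i < m)%nat -> (al < n)%nat ->
  partial (fun x => phid m n Gam al x q1) q0 i
  = - dlt i (k + al)%nat - sumR k (fun a => dGm i al a * Dl a - Gm al a * dlt i a).
Proof.
  intros Hi Hal. apply partial_eq. unfold phid. dcal. rewrite line_0. clean0.
  unfold Gm, dGm, Dl, Rminus. f_equal. f_equal. apply sumR_ext; intros; ring.
Qed.

Definition cc i a := dlt i a + sumR n (fun al => dlt i (k + al)%nat * Gm al a).

Lemma dHp_aux i :
  / 2 * sumR k (fun a => sumR k (fun b => N a b * cc i a * P b + N a b * P a * cc i b))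
  = sumR k (fun a => cc i a * y a).
Proof.
  rewrite (sumR_ext k _ (fun a => sumR k (fun b => N a b * cc i a * P b)
                                 + sumR k (fun b => N a b * P a * cc i b))).
  2:{ intros a Ha. apply sumR_plus. }
  rewrite sumR_plus.
  assert (E1 : sumR k (fun a => sumR k (fun b => N a b * cc i a * P b)) = sumR k (fun a => cc i a * y a)).
  { apply sumR_ext; intros a Ha. unfold y. sumx. }
  assert (E2 : sumR k (fun a => sumR k (fun b => N a b * P a * cc i b)) = sumR k (fun a => cc i a * y a)).
  { rewrite sumR_swap. apply sumR_ext; intros b Hb. unfold y. sum_in. apply sumR_ext; intros a Ha.
    rewrite (N_sym a b) by auto. ring. }
  rewrite E1, E2. field.
Qed.

Lemma dHp_eq i : (i < m)%nat ->
  partial (fun p => Ham m n g V Gam q0 p) p1 i = sumR k (fun a => cc i a * y a).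
Proof.
  intros Hi. apply partial_eq. unfold Ham, Pa. cbv zeta. dcal. rewrite line_0. clean0.
  exact (dHp_aux i).
Qed.

Definition HC := forall al, (al < n)%nat -> Dl (k + al)%nat = sumR k (fun a => Gm al a * Dl a).

Lemma lift1_id : HC -> forall l, (l < m)%nat ->
  liftG k 1 (fun al a => Gam al a q0) Dl l = Dl l.
Proof.
  intros Hc l Hl. destruct (Nat.ltb_spec l k).
  - rewrite liftG_lo by auto. ring.
  - replace l with (k + (l - k))%nat by lia. rewrite liftG_hi. rewrite Hc by lia. reflexivity.
Qed.

Lemma S6 : HC -> forall a, (a < k)%nat ->
  sumR k (fun b => gm a b * Dl b)
  = sumR m (fun j => G a j * Dl j) + sumR n (fun al => Gm al a * sumR m (fun j => G (k + al)%nat j * Dl j)).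
Proof.
  intros Hc a Ha.
  transitivity (sumR k (fun c => sumR k (fun d => gm c d * dlt a c * Dl d))).
  { rewrite (sumR_ext k (fun c => sumR k (fun d => gm c d * dlt a c * Dl d))
                        (fun c => dlt a c * sumR k (fun d => gm c d * Dl d))).
    - rewrite sumR_dlt by auto. reflexivity.
    - intros c Hc'. sumx. }
  unfold gm. rewrite (gam_quad q0 (dlt a) Dl HU0).
  rewrite (sumR_ext m _ (fun j => liftG k 1 (fun al a => Gam al a q0) (dlt a) j
                                  * sumR m (fun l => G j l * Dl l))).
  2:{ intros j Hj. cbv beta. sum_in. apply sumR_ext; intros l Hl. rewrite lift1_id by auto.
      unfold G. ring. }
  rewrite sumR_m. f_equal.
  - rewrite (sumR_ext k _ (fun j => dlt a j * sumR m (fun l => G j l * Dl l))).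
    2:{ intros j Hj. cbv beta. rewrite liftG_lo by auto. ring. }
    rewrite (sumR_dlt k a (fun j => sumR m (fun l => G j l * Dl l))) by auto. reflexivity.
  - apply sumR_ext; intros al Hal. rewrite liftG_hi. f_equal.
    rewrite (sumR_ext k _ (fun c => dlt a c * Gm al c)).
    2:{ intros c Hc'. cbv beta. unfold Gm. ring. }
    apply sumR_dlt; auto.
Qed.

Lemma lift1_id' : HC -> forall l, (l < m)%nat -> liftG k 1 Gm Dl l = Dl l.
Proof. intros Hc l Hl. exact (lift1_id Hc l Hl). Qed.

Lemma sumR_kn f : sumR m f = sumR (k + n) f.
Proof. f_equal. lia. Qed.

Lemma dG_sym i a b : (i < m)%nat -> (a < m)%nat -> (b < m)%nat -> dG i a b = dG i b a.
Proof.
  intros Hi Ha Hb. destruct (open_line m U q0 i HU HU0) as [d [Hd Hl]].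
  assert (H1 : D0 (fun t => g (line q0 i t) b a) (dG i a b)).
  { apply D0_loc with (f := fun t => g (line q0 i t) a b) (d := d); auto.
    - intros t Ht. apply g_sym; auto.
    - apply D0_gq; auto. }
  exact (D0_unique _ _ _ H1 (D0_gq i b a Hi Hb Ha)).
Qed.

Lemma G_sym a b : (a < m)%nat -> (b < m)%nat -> G a b = G b a.
Proof. intros; unfold G; apply g_sym; auto. Qed.

Lemma ZW_eq1 i : HC ->
  sumR n (fun al => sumR m (fun j => G (k + al)%nat j * Dl j) * sumR k (fun a => dGm i al a * Dl a))
  = sumR (k + n) (fun j => sumR (k + n) (fun l =>
       G j l * liftG k 1 Gm Dl j * liftG k 0 (dGm i) Dl l)).
Proof.
  intros Hc. symmetry.
  rewrite (sumR_ext (k + n) _ (fun j => sumR n (fun al =>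
       G j (k + al)%nat * Dl j * sumR k (fun a => dGm i al a * Dl a)))).
  2:{ intros j Hj. cbv beta. rewrite sumR_split.
      rewrite sumR_zero'. 2:{ intros l Hl. rewrite (liftG_lo k 0 (dGm i) Dl l) by auto. ring. }
      rewrite Rplus_0_l. apply sumR_ext; intros al Hal. rewrite liftG_hi, (lift1_id' Hc) by lia. reflexivity. }
  rewrite sumR_swap. apply sumR_ext; intros al Hal.
  rewrite sumR_scal_r. rewrite sumR_kn. apply sumR_ext; intros j Hj.
  rewrite (G_sym j) by lia. ring.
Qed.

Lemma ZW_eq2 i : HC ->
  sumR n (fun al => sumR m (fun j => G (k + al)%nat j * Dl j) * sumR k (fun a => dGm i al a * Dl a))
  = sumR (k + n) (fun j => sumR (k + n) (fun l =>
       G j l * liftG k 0 (dGm i) Dl j * liftG k 1 Gm Dl l)).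
Proof.
  intros Hc. rewrite (ZW_eq1 i Hc). rewrite sumR_swap. apply sumR_ext; intros j Hj.
  apply sumR_ext; intros l Hl. rewrite (G_sym j l) by lia. ring.
Qed.

Lemma Q_eq i : HC ->
  sumR m (fun j => sumR m (fun l => dG i j l * Dl j * Dl l))
  = sumR (k + n) (fun j => sumR (k + n) (fun l =>
       dG i j l * liftG k 1 Gm Dl j * liftG k 1 Gm Dl l)).
Proof.
  intros Hc. rewrite <- !sumR_kn. apply sumR_ext; intros j Hj. rewrite <- !sumR_kn.
  apply sumR_ext; intros l Hl. rewrite !(lift1_id' Hc) by lia. reflexivity.
Qed.

Lemma coef_eq i c d : (i < m)%nat -> (c < k)%nat -> (d < k)%nat ->
  dgamE i c d =
   (1 * 1 * dG i c d + 1 * sumR n (fun al => dG i c (k + al)%nat * Gm al d)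
    + 1 * sumR n (fun al => dG i (k + al)%nat d * Gm al c)
    + sumR n (fun al => sumR n (fun be => dG i (k + al)%nat (k + be)%nat * Gm al c * Gm be d)))
 + (1 * 0 * G c d + 1 * sumR n (fun al => G c (k + al)%nat * dGm i al d)
    + 0 * sumR n (fun al => G (k + al)%nat d * Gm al c)
    + sumR n (fun al => sumR n (fun be => G (k + al)%nat (k + be)%nat * Gm al c * dGm i be d)))
 + (0 * 1 * G c d + 0 * sumR n (fun al => G c (k + al)%nat * Gm al d)
    + 1 * sumR n (fun al => G (k + al)%nat d * dGm i al c)
    + sumR n (fun al => sumR n (fun be => G (k + al)%nat (k + be)%nat * dGm i al c * Gm be d))).
Proof.
  intros Hi Hc Hd. unfold dgamE.
  rewrite (sumR_plus n (fun al => dG i c (k + al)%nat * Gm al d) (fun al => G c (k + al)%nat * dGm i al d)).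
  rewrite (sumR_ext n (fun al => dG i d (k + al)%nat * Gm al c + G d (k + al)%nat * dGm i al c)
     (fun al => dG i (k + al)%nat d * Gm al c + G (k + al)%nat d * dGm i al c)).
  2:{ intros al Hal. rewrite (dG_sym i d), (G_sym d) by lia. reflexivity. }
  rewrite (sumR_plus n (fun al => dG i (k + al)%nat d * Gm al c) (fun al => G (k + al)%nat d * dGm i al c)).
  rewrite (sumR_ext n (fun al => sumR n (fun be =>
       (dG i (k+al)%nat (k+be)%nat * Gm al c + G (k+al)%nat (k+be)%nat * dGm i al c) * Gm be d
       + G (k+al)%nat (k+be)%nat * Gm al c * dGm i be d))
     (fun al => sumR n (fun be => dG i (k + al)%nat (k + be)%nat * Gm al c * Gm be d)
       + sumR n (fun be => G (k + al)%nat (k + be)%nat * Gm al c * dGm i be d)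
       + sumR n (fun be => G (k + al)%nat (k + be)%nat * dGm i al c * Gm be d))).
  2:{ intros al Hal. rewrite <- !sumR_plus. apply sumR_ext; intros; ring. }
  rewrite !sumR_plus. ring.
Qed.

Lemma S7 i : HC -> (i < m)%nat ->
  sumR m (fun j => sumR m (fun l => dG i j l * Dl j * Dl l))
  + 2 * sumR n (fun al => sumR m (fun j => G (k + al)%nat j * Dl j) * sumR k (fun a => dGm i al a * Dl a))
  = sumR k (fun c => sumR k (fun d => dgamE i c d * Dl c * Dl d)).
Proof.
  intros Hc Hi.
  set (X := sumR n (fun al => sumR m (fun j => G (k + al)%nat j * Dl j) * sumR k (fun a => dGm i al a * Dl a))).
  assert (E1 := ZW_eq1 i Hc). assert (E2 := ZW_eq2 i Hc). fold X in E1, E2.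
  replace (2 * X) with (X + X) by ring.
  rewrite E1 at 1. rewrite E2. rewrite (Q_eq i Hc). rewrite !lift_bilin.
  rewrite <- !sumR_plus. apply sumR_ext; intros c Hc'. rewrite <- !sumR_plus.
  apply sumR_ext; intros d Hd. rewrite (coef_eq i c d) by auto. ring.
Qed.

Lemma P_y a : (a < k)%nat -> P a = sumR k (fun c => gm c a * y c).
Proof.
  intros Ha. unfold y.
  rewrite (sumR_ext k _ (fun c => sumR k (fun b => gm a c * N c b * P b))).
  2:{ intros c Hc. cbv beta. rewrite (gm_sym c a) by auto. sumx. }
  rewrite sumR_swap.
  rewrite (sumR_ext k _ (fun b => (if Nat.eqb a b then 1 else 0) * P b)).
  2:{ intros b Hb. cbv beta. rewrite <- N_spec by auto. rewrite sumR_scal_r. reflexivity. }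
  rewrite <- (sumR_delta k a P Ha). apply sumR_ext; intros b Hb.
  destruct (Nat.eqb a b); ring.
Qed.

Lemma S8 i : (i < m)%nat ->
  sumR k (fun a => sumR k (fun b => dN i a b * P a * P b))
  = - sumR k (fun c => sumR k (fun d => dgamE i c d * y c * y d)).
Proof.
  intros Hi.
  transitivity (sumR k (fun a => sumR k (fun b => sumR k (fun c => dN i a b * gm c a * y c * P b)))).
  { apply sumR_ext; intros a Ha. apply sumR_ext; intros b Hb. rewrite (P_y a) by auto. sumx. }
  rewrite sumR_swap.
  rewrite (sumR_ext k _ (fun b => sumR k (fun c => sumR k (fun a => dN i a b * gm c a * y c * P b)))).
  2:{ intros b Hb. apply sumR_swap. }
  rewrite sumR_swap. rewrite <- sumR_opp. apply sumR_ext; intros c Hc.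
  rewrite (sumR_ext k _ (fun b => y c * P b * sumR k (fun a => gm c a * dN i a b))).
  2:{ intros b Hb. cbv beta. sumx. }
  rewrite (sumR_ext k (fun b => y c * P b * sumR k (fun a => gm c a * dN i a b))
             (fun b => - (y c * P b * sumR k (fun a => dgamE i c a * N a b)))).
  2:{ intros b Hb. cbv beta.
      assert (E := dspec i c b Hi Hc Hb). rewrite sumR_plus in E.
      replace (sumR k (fun a => gm c a * dN i a b)) with (- sumR k (fun a => dgamE i c a * N a b)) by lra.
      ring. }
  rewrite sumR_opp. f_equal.
  rewrite (sumR_ext k (fun b => y c * P b * sumR k (fun a => dgamE i c a * N a b))
            (fun b => sumR k (fun a => dgamE i c a * y c * (N a b * P b)))).
  2:{ intros b Hb. cbv beta. sumx. }
  rewrite sumR_swap. apply sumR_ext; intros a Ha.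
  replace (y a) with (sumR k (fun b => N a b * P b)) by reflexivity. sumx.
Qed.

Definition W i al := sumR k (fun a => dGm i al a * Dl a).
Definition Z al := sumR m (fun j => G (k + al)%nat j * Dl j).

Lemma core i lam : HC -> (forall a, (a < k)%nat -> Dl a = h * y a) -> (i < m)%nat ->
  (forall al, (al < n)%nat -> lam al = p1 (k + al)%nat - / h * Z al) ->
  p1 i = partial (fun x => LLd m g V h q0 x) q1 i
         + sumR n (fun al => lam al * partial (fun x => phid m n Gam al q0 x) q1 i) ->
  partial (fun x => LLd m g V h x q1) q0 i
  + sumR n (fun al => lam al * partial (fun x => phid m n Gam al x q1) q0 i)
  + p1 i + h * partial (fun q => Ham m n g V Gam q p1) q0 i = 0.
Proof.
  intros Hc Hy Hi Hlam Hp1.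
  assert (EL : sumR n (fun al => lam al * partial (fun x => phid m n Gam al x q1) q0 i)
             + sumR n (fun al => lam al * partial (fun x => phid m n Gam al q0 x) q1 i)
             = - sumR n (fun al => lam al * W i al)).
  { rewrite <- sumR_plus, <- sumR_opp. apply sumR_ext; intros al Hal.
    rewrite dphiq0_eq, dphiq1_eq by auto. unfold W. rewrite sumR_minus. ring. }
  assert (ELW : sumR n (fun al => lam al * W i al)
              = sumR n (fun al => p1 (k + al)%nat * W i al) - / h * sumR n (fun al => Z al * W i al)).
  { rewrite sumR_scal_l, <- sumR_minus. apply sumR_ext; intros al Hal. rewrite Hlam by auto. ring. }
  set (D := sumR k (fun a => dP i a * y a)).
  assert (EH : sumR k (fun a => sumR k (fun b =>
      (dN i a b * P a + N a b * dP i a) * P b + N a b * P a * dP i b))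
      = sumR k (fun a => sumR k (fun b => dN i a b * P a * P b)) + 2 * D).
  { rewrite (sumR_ext k _ (fun a => sumR k (fun b => dN i a b * P a * P b)
          + (sumR k (fun b => N a b * dP i a * P b) + sumR k (fun b => N a b * P a * dP i b)))).
    2:{ intros a Ha. rewrite <- !sumR_plus. apply sumR_ext; intros; ring. }
    rewrite sumR_plus, sumR_plus.
    assert (E1 : sumR k (fun a => sumR k (fun b => N a b * dP i a * P b)) = D).
    { unfold D. apply sumR_ext; intros a Ha. unfold y. sumx. }
    assert (E2 : sumR k (fun a => sumR k (fun b => N a b * P a * dP i b)) = D).
    { unfold D. rewrite sumR_swap. apply sumR_ext; intros b Hb. unfold y. sum_in.
      apply sumR_ext; intros a Ha. rewrite (N_sym a b) by auto. ring. }
    rewrite E1, E2. ring. }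
  assert (ED : h * D = sumR n (fun al => p1 (k + al)%nat * W i al)).
  { unfold D. rewrite sumR_scal_l.
    rewrite (sumR_ext k _ (fun a => sumR n (fun al => p1 (k + al)%nat * dGm i al a * Dl a))).
    2:{ intros a Ha. cbv beta. rewrite (Hy a Ha). unfold dP. sumx. }
    rewrite sumR_swap. apply sumR_ext; intros al Hal. unfold W. sumx. }
  assert (EG : sumR k (fun c => sumR k (fun d => dgamE i c d * Dl c * Dl d))
             = h * h * sumR k (fun c => sumR k (fun d => dgamE i c d * y c * y d))).
  { sum_in. apply sumR_ext; intros c Hc'. sum_in. apply sumR_ext; intros d Hd.
    rewrite !Hy by auto. ring. }
  assert (E7 := S7 i Hc Hi). fold (Z) in E7.
  rewrite Hp1. rewrite dLq0_eq, dLq1_eq, dHq_eq by auto. rewrite EH, S8 by auto.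
  set (Q := sumR m (fun j => sumR m (fun l => dG i j l * Dl j * Dl l))) in *.
  set (A := sumR m (fun j => G i j * Dl j)) in *.
  set (S1 := sumR n (fun al => lam al * partial (fun x => phid m n Gam al x q1) q0 i)) in *.
  set (S2 := sumR n (fun al => lam al * partial (fun x => phid m n Gam al q0 x) q1 i)) in *.
  set (LW := sumR n (fun al => lam al * W i al)) in *.
  set (PW := sumR n (fun al => p1 (k + al)%nat * W i al)) in *.
  set (GY := sumR k (fun c => sumR k (fun d => dgamE i c d * y c * y d))) in *.
  set (GD := sumR k (fun c => sumR k (fun d => dgamE i c d * Dl c * Dl d))) in *.
  set (ZW := sumR n (fun al => Z al * W i al)) in *.
  assert (E7' : Q + 2 * ZW = GD) by exact E7.
  replace S1 with (- LW - S2) by lra. rewrite ELW. rewrite <- ED.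
  replace Q with (GD - 2 * ZW) by lra. rewrite EG. field. lra.
Qed.

Definition Rr i (lam : nat -> R) := partial (fun x => LLd m g V h q0 x) q1 i
         + sumR n (fun al => lam al * partial (fun x => phid m n Gam al q0 x) q1 i).

Lemma dlt_kk be al : dlt (k + be) (k + al) = dlt be al.
Proof. unfold dlt. destruct (Nat.eqb_spec (k+be) (k+al)), (Nat.eqb_spec be al); try lia; reflexivity. Qed.
Lemma dlt_ne i j : i <> j -> dlt i j = 0.
Proof. intros H. unfold dlt. destruct (Nat.eqb_spec i j); [lia|reflexivity]. Qed.

Lemma R_hi lam be : (be < n)%nat -> Rr (k + be)%nat lam = / h * Z be + lam be.
Proof.
  intros Hbe. unfold Rr. rewrite dLq1_eq by lia.
  rewrite (sumR_ext n _ (fun al => dlt be al * lam al)).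
  2:{ intros al Hal. cbv beta. rewrite dphiq1_eq by lia. rewrite dlt_kk.
      rewrite sumR_zero'. ring. intros a Ha. rewrite dlt_ne by lia. ring. }
  rewrite sumR_dlt by auto. unfold Z. reflexivity.
Qed.

Lemma R_lo lam a : (a < k)%nat ->
  Rr a lam = / h * sumR m (fun j => G a j * Dl j) - sumR n (fun al => lam al * Gm al a).
Proof.
  intros Ha. unfold Rr. rewrite dLq1_eq by lia. unfold Rminus. f_equal.
  rewrite <- sumR_opp. apply sumR_ext; intros al Hal. rewrite dphiq1_eq by lia.
  rewrite dlt_ne by lia.
  rewrite (sumR_ext k _ (fun a' => dlt a a' * Gm al a')).
  2:{ intros; cbv beta; ring. }
  rewrite sumR_dlt by auto. ring.
Qed.

Lemma dHp_lo a : (a < k)%nat -> partial (fun p => Ham m n g V Gam q0 p) p1 a = y a.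
Proof.
  intros Ha. rewrite dHp_eq by lia. unfold cc.
  rewrite (sumR_ext k _ (fun a' => dlt a a' * y a')).
  2:{ intros a' Ha'. cbv beta. rewrite sumR_zero'. ring. intros al Hal. rewrite dlt_ne by lia. ring. }
  apply sumR_dlt; auto.
Qed.

Lemma dHp_hi be : (be < n)%nat ->
  partial (fun p => Ham m n g V Gam q0 p) p1 (k + be)%nat = sumR k (fun a => Gm be a * y a).
Proof.
  intros Hbe. rewrite dHp_eq by lia. unfold cc. apply sumR_ext; intros a Ha.
  rewrite dlt_ne by lia.
  rewrite (sumR_ext n _ (fun al => dlt be al * Gm al a)).
  2:{ intros al Hal. cbv beta. rewrite dlt_kk. ring. }
  rewrite sumR_dlt by auto. ring.
Qed.

Lemma R_P lam a : HC -> (forall al, (al < n)%nat -> lam al = p1 (k + al)%nat - / h * Z al) ->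
  (a < k)%nat -> Rr a lam - p1 a = / h * sumR k (fun b => gm a b * Dl b) - P a.
Proof.
  intros Hc Hlam Ha. rewrite R_lo by auto. rewrite (S6 Hc a Ha).
  rewrite (sumR_ext n (fun al => lam al * Gm al a) (fun al => p1 (k + al)%nat * Gm al a - / h * (Gm al a * Z al))).
  2:{ intros al Hal. rewrite Hlam by auto. ring. }
  rewrite sumR_minus, <- sumR_scal_l. unfold P, Pa, Z, Gm. ring.
Qed.

Lemma HC_iff : (forall al, (al < n)%nat -> phid m n Gam al q0 q1 = 0) <-> HC.
Proof.
  unfold HC, phid, Dl, Gm. split; intros H al Hal; specialize (H al Hal); lra.
Qed.

Lemma y_from_P : (forall a, (a < k)%nat -> P a = / h * sumR k (fun b => gm a b * Dl b)) ->
  forall a, (a < k)%nat -> Dl a = h * y a.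
Proof.
  intros HP a Ha. unfold y.
  rewrite (sumR_ext k _ (fun b => / h * sumR k (fun c => N a b * gm b c * Dl c))).
  2:{ intros b Hb. cbv beta. rewrite HP by auto. sumx. }
  rewrite <- sumR_scal_l, sumR_swap.
  rewrite (sumR_ext k _ (fun c => (if Nat.eqb a c then 1 else 0) * Dl c)).
  2:{ intros c Hc. cbv beta. rewrite <- (N_left a c) by auto. rewrite sumR_scal_r. reflexivity. }
  rewrite (sumR_ext k _ (fun c => if Nat.eqb a c then Dl c else 0)).
  2:{ intros c Hc. destruct (Nat.eqb a c); ring. }
  rewrite sumR_delta by auto. field. lra.
Qed.

Lemma P_from_y : (forall a, (a < k)%nat -> Dl a = h * y a) ->
  forall a, (a < k)%nat -> P a = / h * sumR k (fun b => gm a b * Dl b).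
Proof.
  intros Hy a Ha. rewrite P_y by auto.
  rewrite (sumR_ext k (fun b => gm a b * Dl b) (fun b => h * (gm b a * y b))).
  2:{ intros b Hb. rewrite Hy, gm_sym by auto. ring. }
  rewrite <- sumR_scal_l. field. lra.
Qed.

Lemma index_split i : (i < m)%nat -> (i < k)%nat \/ exists be, (be < n)%nat /\ i = (k + be)%nat.
Proof. intros Hi. destruct (Nat.ltb_spec i k); [left; auto | right; exists (i - k)%nat; split; lia]. Qed.

Lemma hsum be : (forall a, (a < k)%nat -> Dl a = h * y a) ->
  h * sumR k (fun a => Gm be a * y a) = sumR k (fun a => Gm be a * Dl a).
Proof. intros Hy. rewrite sumR_scal_l. apply sumR_ext; intros a Ha. rewrite Hy by auto. ring. Qed.

Lemma E_to_U p0 : U q1 ->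
  (forall i, (i < m)%nat ->
    p1 i = p0 i - h * partial (fun q => Ham m n g V Gam q p1) q0 i /\
    q1 i = q0 i + h * partial (fun p => Ham m n g V Gam q0 p) p1 i) ->
  Upsilon_Sigma_Ld m n U g V Gam h q0 p0 q1 p1.
Proof.
  intros HU1 H.
  assert (Hy : forall a, (a < k)%nat -> Dl a = h * y a).
  { intros a Ha. destruct (H a ltac:(lia)) as [_ Hq]. rewrite dHp_lo in Hq by auto.
    unfold Dl. lra. }
  assert (Hc : HC).
  { intros al Hal. destruct (H (k + al)%nat ltac:(lia)) as [_ Hq]. rewrite dHp_hi in Hq by auto.
    rewrite <- hsum by auto. unfold Dl. lra. }
  split. { split; [auto | split; [auto|]]. apply HC_iff; auto. }
  exists (fun al => p1 (k + al)%nat - / h * Z al). intros i Hi.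
  assert (Hp1 : p1 i = Rr i (fun al => p1 (k + al)%nat - / h * Z al)).
  { destruct (index_split i Hi) as [Hik | [be [Hbe ->]]].
    - assert (E := R_P (fun al => p1 (k + al)%nat - / h * Z al) i Hc (fun al _ => eq_refl) Hik).
      rewrite P_from_y in E by auto. lra.
    - rewrite R_hi by auto. ring. }
  split.
  - assert (E := core i (fun al => p1 (k + al)%nat - / h * Z al) Hc Hy Hi (fun al _ => eq_refl) Hp1).
    destruct (H i Hi) as [Hp _]. lra.
  - exact Hp1.
Qed.

Lemma U_to_E p0 : Upsilon_Sigma_Ld m n U g V Gam h q0 p0 q1 p1 ->
  symplectic_euler m n U g V Gam h q0 p0 q1 p1.
Proof.
  intros [[_ [HU1 Hphi]] [lam Hl]].
  assert (Hc : HC) by (apply HC_iff; auto).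
  assert (Hlam : forall al, (al < n)%nat -> lam al = p1 (k + al)%nat - / h * Z al).
  { intros al Hal. destruct (Hl (k + al)%nat ltac:(lia)) as [_ E].
    change (p1 (k + al)%nat = Rr (k + al)%nat lam) in E. rewrite R_hi in E by auto. lra. }
  assert (HP : forall a, (a < k)%nat -> P a = / h * sumR k (fun b => gm a b * Dl b)).
  { intros a Ha. destruct (Hl a ltac:(lia)) as [_ E].
    change (p1 a = Rr a lam) in E. assert (E2 := R_P lam a Hc Hlam Ha). lra. }
  assert (Hy := y_from_P HP).
  split; [auto | split; [auto|]]. intros i Hi. split.
  - destruct (Hl i Hi) as [E1 E2].
    assert (E := core i lam Hc Hy Hi Hlam E2). lra.
  - destruct (index_split i Hi) as [Hik | [be [Hbe ->]]].
    + rewrite dHp_lo by auto. rewrite <- Hy by auto. unfold Dl. ring.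
    + rewrite dHp_hi by auto. rewrite hsum by auto. rewrite <- Hc by auto. unfold Dl. ring.
Qed.

End Point.

Lemma main_iff q0 p0 q1 p1 :
  Upsilon_Sigma_Ld m n U g V Gam h q0 p0 q1 p1 <-> symplectic_euler m n U g V Gam h q0 p0 q1 p1.
Proof.
  split.
  - intros Hu. assert (HU0 : U q0) by (destruct Hu as [[H0 _] _]; exact H0).
    apply U_to_E; auto.
  - intros [HU0 [HU1 H]]. apply E_to_U; auto.
Qed.
End Main.

Theorem mainTheorem4 (m n : nat) (U : vec -> Prop) (g : vec -> nat -> nat -> R)
  (V : vec -> R) (Gam : nat -> nat -> vec -> R) (h : R) :
  (n <= m)%nat ->
  is_open m U ->
  riemannian m U g ->
  smooth_on m U V -> dep_first m V ->
  (forall al a, (al < n)%nat -> (a < m - n)%nat ->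
     smooth_on m U (Gam al a) /\ dep_first m (Gam al a)) ->
  0 < h ->
  forall q0 p0 q1 p1 : vec,
    Upsilon_Sigma_Ld m n U g V Gam h q0 p0 q1 p1 <->
    symplectic_euler m n U g V Gam h q0 p0 q1 p1.
Proof.
  intros Hnm HU Hg HV _ HGam Hh q0 p0 q1 p1.
  eapply main_iff; eauto.
Qed.
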